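(* Let $\psi:\mathbb{N}\to\mathbb{R}_{\ge0}$ satisfy $\lim_{q\to\infty}\psi(q)/q=0$, fix $\delta>0$, and suppose $\psi(q)\ge\delta$ for every $q\in\mathbb{N}$ with $\psi(q)\ne0$. Let $(\mathcal{I}_q)_{q\in\mathbb{N}}$ be any sequence with $\mathcal{I}_q\subseteq\mathbb{Z}_q$. Then the following are equivalent: (a) there exists $\gamma\in\mathbb{R}$ such that $\mu(\limsup_{q\to\infty}E_q^{\mathcal{I}}(\gamma,\psi))=1$; (b) for every $\gamma\in\mathbb{R}$, $\mu(\limsup_{q\to\infty}E_q^{\mathcal{I}}(\gamma,\psi))=1$.
   Context: $\mu$ is Lebesgue measure, $\mathbb{Z}_q=\{0,\dots,q-1\}$, and $\|y\|$ denotes the distance from $y\in\mathbb{R}$ to the nearest integer. For $\gamma\in\mathbb{R}$, $$E_q^{\mathcal{I}}(\gamma,\psi):=\Big\{x\in[0,1]:\Big\|x-\frac{a+\gamma}{q}\Big\|\le\frac{\psi(q)}{q}\text{ for some }a\in\mathcal{I}_q\Big\}.$$ *)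

(* Defs.v *)
From HB Require Import structures.
From mathcomp Require Import all_boot all_order all_algebra.
From mathcomp Require Import all_classical all_reals all_analysis.
Set Implicit Arguments. Unset Strict Implicit. Unset Printing Implicit Defensive.
Import Order.TTheory GRing.Theory Num.Theory.
Import numFieldNormedType.Exports.
Local Open Scope classical_set_scope.
Local Open Scope ring_scope.

Definition dist_nint {R : realType} (y : R) : R :=
  Num.min (y - (Num.floor y)%:~R) ((Num.ceil y)%:~R - y).

Definition Eset {R : realType} (I : nat -> set nat) (psi : nat -> R)
    (gamma : R) (q : nat) : set R :=
  [set x | 0 <= x <= 1 /\
     exists a : nat, I q a /\
       dist_nint (x - (a%:R + gamma) / q%:R) <= psi q / q%:R].

Definition limsup_set {R : realType} (E : nat -> set R) : set R :=
  \bigcap_(n in [set: nat]) \bigcup_(k in [set k | (n <= k)%N]) E k.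

(* Main.v *)
Require Import Defs.
From HB Require Import structures.
From mathcomp Require Import all_boot all_order all_algebra.
From mathcomp Require Import all_classical all_reals all_analysis.
From mathcomp Require Import ring lra measurable_realfun.
Import Order.TTheory GRing.Theory Num.Theory.
Import numFieldNormedType.Exports.
Local Open Scope classical_set_scope.
Local Open Scope ring_scope.



Lemma dist_le {R : realType} (y : R) (n : int) : dist_nint y <= `|y - n%:~R|.
Proof.
rewrite /dist_nint.
have [nf|fn] := leP n (Num.floor y).
  have h1 : n%:~R <= (Num.floor y)%:~R :> R by rewrite ler_int.
  have h2 := floor_le y.
  rewrite ge_min; apply/orP; left.
  rewrite ger0_norm ?subr_ge0; last exact: le_trans h2.
  by rewrite lerB.
have fn' : Num.floor y + 1 <= n by rewrite lezD1.
have h3 : y < n%:~R.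
  by apply: (lt_le_trans (floorD1_gt y)); rewrite ler_int.
have h4 : Num.ceil y <= n.
  by rewrite real_ceil_le_int ?num_real // ltW.
rewrite ge_min; apply/orP; right.
rewrite ltr0_norm ?subr_lt0 // opprB lerB // ler_int.
exact: h4.
Qed.

Lemma dist_eq {R : realType} (y : R) : exists n : int, `|y - n%:~R| = dist_nint y.
Proof.
rewrite /dist_nint.
have h1 := floor_le y.
have h2 : y <= (Num.ceil y)%:~R by rewrite real_ceil_ge ?num_real.
have [e|e] := leP (y - (Num.floor y)%:~R) ((Num.ceil y)%:~R - y).
  by exists (Num.floor y); rewrite ger0_norm ?subr_ge0.
by exists (Num.ceil y); rewrite distrC ger0_norm ?subr_ge0.
Qed.

Lemma dist_ge0 {R : realType} (y : R) : 0 <= dist_nint y.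
Proof. by have [n <-] := dist_eq y. Qed.

Lemma dist_leP {R : realType} (y r : R) :
  dist_nint y <= r <-> exists n : int, `|y - n%:~R| <= r.
Proof.
split.
  by have [n <-] := dist_eq y; exists n.
by move=> [n h]; exact: le_trans (dist_le y n) h.
Qed.



Lemma meas_dist {R : realType} (c r : R) :
  measurable [set x : R | dist_nint (x - c) <= r].
Proof.
have -> : [set x : R | dist_nint (x - c) <= r] =
   \bigcup_(n : int) `[c + n%:~R - r, c + n%:~R + r]%classic.
  apply/seteqP; split => x /=.
    move/dist_leP => [n hn]; exists n => //=.
    by rewrite in_itv /= -ler_distl opprD addrA.
  move=> [n _] /=; rewrite in_itv /= -ler_distl => h.
  by apply/dist_leP; exists n; rewrite opprD addrA in h.
exact: countable_bigcupT_measurable.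
Qed.

Lemma meas_E {R : realType} (I : nat -> set nat) (psi : nat -> R) g q :
  measurable (Eset I psi g q).
Proof.
have -> : Eset I psi g q = `[0, 1]%classic `&`
    \bigcup_a [set x | I q a /\ dist_nint (x - (a%:R + g) / q%:R) <= psi q / q%:R].
  apply/seteqP; split => x /=.
    move=> [h [a [h1 h2]]]; split; first by rewrite in_itv.
    by exists a.
  by rewrite in_itv /= => -[h [a _ [h1 h2]]]; split => //; exists a.
apply: measurableI; first exact: measurable_itv.
apply: bigcupT_measurable => a.
have [Ia|nIa] := pselect (I q a).
  have -> : [set x | I q a /\ dist_nint (x - (a%:R + g) / q%:R) <= psi q / q%:R]
    = [set x | dist_nint (x - (a%:R + g) / q%:R) <= psi q / q%:R].
    by apply/seteqP; split => x /= => [[]|] .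
  exact: meas_dist.
have -> : [set x | I q a /\ dist_nint (x - (a%:R + g) / q%:R) <= psi q / q%:R]
    = set0.
  by apply/seteqP; split => x //= [].
exact: measurable0.
Qed.

Lemma meas_limsup {R : realType} (E : nat -> set R) :
  (forall q, measurable (E q)) -> measurable (limsup_set E).
Proof.
move=> mE; apply: bigcap_measurableType => n _.
by apply: bigcup_measurable => k _.
Qed.



Lemma key {R : realType} (B : set R) (x : R) : measurable B ->
  (0 < x < 1) ->
  (lebesgue_measure ((`]0%R, 1%R[ `\` B) `&` ball x r) *
     (lebesgue_measure (ball x r))^-1 @[r --> 0^'+] --> 1%:E)%E ->
  (forall eta, 0 < eta -> exists z r, [/\ 0 < r, r < eta, `|x - z| <= r &
       ball z (r / 2) `&` `]0%R, 1%R[ `<=` B]) -> False.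
Proof.
move=> mB /andP[x0 x1] hd hB.
set A := `]0%R, 1%R[ `\` B.
have mA : measurable A by apply: measurableD => //; exact: measurable_itv.
have [hfin hcv] := (fine_cvgP _ _).1 hd.
have hgt := cvgr_gt _ hcv (3/4) ltac:(rewrite ltr_pdivrMr // mul1r ltr_nat //).
have : \forall r \near 0^'+, 
   (lebesgue_measure (A `&` ball x r) * (lebesgue_measure (ball x r))^-1)%E
     \is a fin_num /\ 3/4 < fine (lebesgue_measure (A `&` ball x r) *
     (lebesgue_measure (ball x r))^-1)%E.
  by near=> r; split; [near: r; exact: hfin|near: r; exact: hgt].
move=> /nbhs_ballP [e /= e0 He].
pose eta := Num.min e (Num.min x (1 - x)) / 2.
have eta0 : 0 < eta by rewrite divr_gt0 // lt_min e0 lt_min x0 subr_gt0 x1.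
have [z [r [r0 reta xz Bz]]] := hB eta eta0.
have r2 : r * 2 < Num.min e (Num.min x (1 - x)) by rewrite -ltr_pdivlMr.
move: r2; rewrite !lt_min => /and3P[r2e r2x r2x'].
have [fin gt] := He (r * 2) ltac:(rewrite /ball /= sub0r normrN gtr0_norm ?mulr_gt0 //)
   ltac:(by rewrite mulr_gt0).
have sub1 : ball z (r / 2) `<=` ball x (r * 2).
  move=> y; rewrite /ball /= => hy.
  have := ler_distD z x y; lra.
have sub2 : ball x (r * 2) `<=` `]0%R, 1%R[.
  move=> y; rewrite /ball /= in_itv /= ltr_distlC => /andP[h1 h2].
  apply/andP; split; lra.
have sub3 : A `&` ball x (r * 2) `<=` ball x (r * 2) `\` ball z (r / 2).
  move=> y [[Iy nBy] bxy]; split => // bzy; exact: nBy (Bz _ (conj bzy Iy)).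
have rp1 : 0 <= r * 2 by rewrite ltW // mulr_gt0.
have rp2 : 0 <= r / 2 by rewrite ltW // divr_gt0.
have mb1 : measurable (ball x (r * 2)) by exact: measurable_ball.
have mb2 : measurable (ball z (r / 2)) by exact: measurable_ball.
have hm : (lebesgue_measure (A `&` ball x (r * 2)) <= (r * 3)%:E)%E.
  apply: (@le_trans _ _ (lebesgue_measure (ball x (r * 2) `\` ball z (r / 2)))).
    apply: le_measure; last exact: sub3; rewrite ?inE.
  - by apply: measurableI.
  - by apply: measurableD.
  rewrite measureD //=; last by rewrite lebesgue_measure_ball ?ltry // ltW // mulr_gt0.
  rewrite setIidr // !lebesgue_measure_ball //.
  rewrite -EFinB ?lee_fin ?lte_fin !mulr2n; rewrite le_eqVlt; apply/orP; left; apply/eqP; by field.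
set m := lebesgue_measure (A `&` ball x (r * 2)) in fin gt hm.
have m0 : (0 <= m)%E by exact: measure_ge0.
have mfin : m \is a fin_num by rewrite ge0_fin_numE // (le_lt_trans hm) ?ltry.
move: gt hm; rewrite -(fineK mfin) lebesgue_measure_ball //.
rewrite inver ifF; last by rewrite mulr2n; apply/negbTE; lra.
rewrite -EFinM /= lee_fin ltr_pdivlMr; last by rewrite mulr2n; lra.
rewrite mulr2n; lra.
Unshelve. all: by end_near.
Qed.



Lemma geom {R : realType} (psi : nat -> R) (delta : R) (I : nat -> set nat)
  (g g' : R) (N : nat) (x : R) :
  (forall q, 0 <= psi q) ->
  (fun q : nat => psi q / q%:R) @ \oo --> (0 : R) ->
  (forall q, psi q != 0 -> delta <= psi q) ->
  (forall q a, I q a -> (a < q)%N) ->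
  `|g' - g| <= delta / 2 ->
  (forall M, exists q, (M <= q)%N /\ psi q != 0 /\ Eset I psi g q x) ->
  forall eta, 0 < eta -> exists z r, [/\ 0 < r, r < eta, `|x - z| <= r &
       ball z (r / 2) `&` `]0%R, 1%R[ `<=`
         \bigcup_(k in [set k | (N <= k)%N]) Eset I psi g' k].
Proof.
move=> psi0 hcv hdel hI hgg hx eta eta0.
have := (cvgrPdist_lt _ _).1 hcv eta eta0 => -[N2 _ HN2].
have [q [Mq [psiq [_ [a [Ia hd]]]]]] := hx (maxn N N2).
have q0 : (0 < q)%N by have := hI _ _ Ia; case: q {Mq psiq hd Ia}.
have Q0 : 0 < q%:R :> R by rewrite ltr0n.
have ppos : 0 < psi q by rewrite lt_def psiq psi0.
set r := psi q / q%:R.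
have r0 : 0 < r by rewrite divr_gt0.
have reta : r < eta.
  have := HN2 q ltac:(by rewrite /= (leq_trans (leq_maxr N N2))).
  by rewrite sub0r normrN gtr0_norm.
set c := (a%:R + g) / q%:R.
have [n hn] := dist_eq (x - c).
exists (c + n%:~R), r; split => //.
  by rewrite opprD addrA hn.
move=> y [bzy /= Iy]; exists q => /=.
  by apply: leq_trans Mq; exact: leq_maxl.
move: Iy; rewrite in_itv /= => /andP[y0 y1].
split; first by rewrite !ltW.
exists a; split => //.
apply/dist_leP; exists n.
have -> : y - (a%:R + g') / q%:R - n%:~R = (y - (c + n%:~R)) + (g - g') / q%:R.
  rewrite /c; field; lra.
apply: (le_trans (ler_normD _ _)).
have h1 : `|y - (c + n%:~R)| < r / 2 by move: bzy; rewrite /ball /= distrC.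
have h2 : `|(g - g') / q%:R| <= r / 2.
  rewrite normrM normfV (gtr0_norm Q0) distrC /r ler_pdivrMr // mulrAC.
  rewrite divfK ?gt_eqF //; apply: (le_trans hgg).
  by rewrite ler_pM2r // hdel.
rewrite -/r; lra.
Qed.



Lemma meas01 {R : realType} : lebesgue_measure (`[0%R, 1%R] : set R) = 1%E.
Proof. by rewrite lebesgue_measure_itv /= lte_fin ltr01 -EFinB subr0. Qed.

Lemma meas01o {R : realType} : lebesgue_measure (`]0%R, 1%R[ : set R) = 1%E.
Proof. by rewrite lebesgue_measure_itv /= lte_fin ltr01 -EFinB subr0. Qed.

Lemma compl_null {R : realType} (L : set R) : measurable L -> L `<=` `[0%R, 1%R] ->
  lebesgue_measure L = 1%E -> lebesgue_measure (`[0%R, 1%R] `\` L) = 0%E.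
Proof.
move=> mL L01 h.
have := measureDI lebesgue_measure (measurable_itv `[0%R, 1%R]) mL.
rewrite /= setIidr // h meas01 => /esym.
have : lebesgue_measure (`[0%R, 1%R] `\` L) \is a fin_num.
  rewrite ge0_fin_numE ?measure_ge0 //.
  apply: (@le_lt_trans _ _ (lebesgue_measure (`[0%R, 1%R] : set R))); last first.
    by rewrite meas01 ltry.
  apply: le_measure; last exact: subDsetl.
  - by rewrite inE; apply: measurableD => //; exact: measurable_itv.
  - by rewrite inE; exact: measurable_itv.
move=> /fineK <-; rewrite -EFinD => -[] h2; congr EFin; lra.
Qed.

Lemma zero_null {R : realType} (I : nat -> set nat) (psi : nat -> R) g :
  lebesgue_measure.-negligible [set x | exists q, psi q = 0 /\ Eset I psi g q x].
Proof.
pose f := fun p : (nat * nat) * int => (p.1.2%:R + g) / p.1.1%:R + p.2%:~R.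
exists (f @` setT); split.
- apply: countable_measurable; first by move=> t; exact: measurable_set1.
  exact: sub_countable (card_image_le f setT) (countableP _).
- apply: countable_lebesgue_measure0.
  exact: sub_countable (card_image_le f setT) (countableP _).
- move=> x [q [p0 [_ [a [_ hd]]]]].
  have [n hn] := dist_eq (x - (a%:R + g) / q%:R).
  exists ((q, a), n) => //=.
  move: hd; rewrite p0 mul0r -hn => h.
  have : `|x - (a%:R + g) / q%:R - n%:~R| = 0 by apply/eqP; rewrite eq_le h normr_ge0.
  move/eqP; rewrite normr_eq0 subr_eq0 => /eqP h3.
  by rewrite /f /= -h3 addrC subrK.
Qed.



Lemma Eset01 {R : realType} (I : nat -> set nat) (psi : nat -> R) g :
  limsup_set (Eset I psi g) `<=` `[0%R, 1%R].
Proof.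
move=> x /(_ 0%N Logic.I) [k _ [/andP[h1 h2] _]].
by rewrite /= in_itv /= h1 h2.
Qed.

Lemma step {R : realType} (psi : nat -> R) (delta : R) (I : nat -> set nat)
  (g g' : R) :
  (forall q, 0 <= psi q) ->
  (fun q : nat => psi q / q%:R) @ \oo --> (0 : R) ->
  (forall q, psi q != 0 -> delta <= psi q) ->
  (forall q a, I q a -> (a < q)%N) ->
  `|g' - g| <= delta / 2 ->
  lebesgue_measure (limsup_set (Eset I psi g)) = 1%E ->
  lebesgue_measure (limsup_set (Eset I psi g')) = 1%E.
Proof.
move=> psi0 hcv hdel hI hgg hL.
set L := limsup_set (Eset I psi g).
have mL : measurable L by apply: meas_limsup => q; exact: meas_E.
have N1 : lebesgue_measure.-negligible (`[0%R, 1%R] `\` L).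
  apply/negligibleP; first by apply: measurableD => //; exact: measurable_itv.
  by apply: compl_null => //; exact: Eset01.
have N2 := zero_null I psi g.
pose BN N := \bigcup_(k in [set k | (N <= k)%N]) Eset I psi g' k.
have mBN N : measurable (BN N) by apply: bigcup_measurable => k _; exact: meas_E.
have HN N : lebesgue_measure.-negligible (`]0%R, 1%R[ `\` BN N).
  set A := `]0%R, 1%R[ `\` BN N.
  have mA : measurable A by apply: measurableD => //; exact: measurable_itv.
  have hae := lebesgue_density mA.
  apply: (negligibleS _ (negligibleU (negligibleU hae N1) N2)).
  move=> x Ax.
  apply: contrapT => hx.
  move: hx => /not_orP [/not_orP [/contrapT hgood hL'] hZ].
  move: (Ax) => [Ix _].
  have x01 : 0 < x < 1 by move: Ix; rewrite /= in_itv.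
  have hxL : L x.
    apply: contrapT => nL; apply: hL'; split => //.
    by move: x01 => /andP[h1 h2]; rewrite /= in_itv /= !ltW.
  have hx' : forall M, exists q, (M <= q)%N /\ psi q != 0 /\ Eset I psi g q x.
    move=> M; have [k Mk Ek] := hxL M Logic.I.
    exists k; split => //; split => //.
    by apply/eqP => h0; apply: hZ; exists k.
  have := hgood; rewrite /= indicE mem_set // => hg.
  apply: (key _ _ (mBN N) x01 hg).
  exact: (@geom _ psi delta I g g' N x psi0 hcv hdel hI hgg hx').
set L' := limsup_set (Eset I psi g').
have mL' : measurable L' by apply: meas_limsup => q; exact: meas_E.
have N3 : lebesgue_measure.-negligible (`]0%R, 1%R[ `\` L').
  apply: (negligibleS _ (negligible_bigcup HN)).
  move=> x [Ix nL]; apply: contrapT => hn; apply: nL => N _.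
  by apply: contrapT => hB; apply: hn; exists N.
have m0 : lebesgue_measure (`]0%R, 1%R[ `\` L') = 0%E.
  by apply/negligibleP => //; apply: measurableD => //; exact: measurable_itv.
have := measureDI lebesgue_measure (measurable_itv `]0%R, 1%R[) mL'.
rewrite /= m0 add0e meas01o => h1.
apply/eqP; rewrite eq_le; apply/andP; split.
  rewrite -(@meas01 R); apply: le_measure; last exact: Eset01.
  - by rewrite inE.
  - by rewrite inE; exact: measurable_itv.
rewrite h1; apply: le_measure; last exact: subIsetr.
- by rewrite inE; apply: measurableI => //; exact: measurable_itv.
- by rewrite inE.
Qed.



Theorem mainTheorem8 (R : realType) (psi : nat -> R) (delta : R)
    (I : nat -> set nat) :
  (forall q, 0 <= psi q) ->
  (fun q : nat => psi q / q%:R) @ \oo --> (0 : R) ->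
  0 < delta ->
  (forall q, psi q != 0 -> delta <= psi q) ->
  (forall q a, I q a -> (a < q)%N) ->
  (exists gamma : R,
      lebesgue_measure (limsup_set (Eset I psi gamma)) = 1%E) <->
  (forall gamma : R,
      lebesgue_measure (limsup_set (Eset I psi gamma)) = 1%E).
Proof.
move=> psi0 hcv d0 hdel hI; split; last by move=> h; exists 0; exact: h.
move=> [g0 hg0] g.
pose n := (Num.truncn (2 * `|g - g0| / delta)).+1.
have n0 : 0 < n%:R :> R by rewrite ltr0n.
pose h := (g - g0) / n%:R.
have hh : `|h| <= delta / 2.
  have d2 : 0 < delta / 2 by rewrite divr_gt0.
  rewrite /h normrM normfV (gtr0_norm n0) ler_pdivrMr // mulrC -ler_pdivrMr //.
  have := truncnS_gt (2 * `|g - g0| / delta); rewrite -/n => /ltW.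
  by rewrite invf_div mulrA [_ * 2]mulrC.
have ind : forall k : nat, lebesgue_measure (limsup_set (Eset I psi (g0 + k%:R * h))) = 1%E.
  elim=> [|k ih]; first by rewrite mul0r addr0.
  apply: (@step _ psi delta I _ _ psi0 hcv hdel hI _ ih).
  have -> : g0 + k.+1%:R * h - (g0 + k%:R * h) = h by rewrite mulrSr; ring.
  exact: hh.
have := ind n; rewrite /h mulrC divfK ?gt_eqF // addrC subrK //.
Qed.
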